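(* Let $(G,\sigma)$ be a connection graph with $\sigma$ absolutely inconsistent (i.e. $\mathcal{L}^\sigma$ invertible). Then for any distinct $i,j\in V$, $$\mathcal{R}^\sigma(i,j)=\begin{bmatrix}(\mathcal{C}^\sigma_{ii})^{-1}&0_{d\times d}\\0_{d\times d}&(\mathcal{C}^\sigma_{jj})^{-1}\end{bmatrix}.$$
   Context: A connection graph $(G,\sigma)$: finite connected weighted graph $G=(V,E,W)$, $V=\{1,\dots,n\}$, $w_{xy}>0$ iff $\{x,y\}\in E$, $\deg(x)=\sum_y w_{xy}$, and $\sigma$ mapping oriented edges to $\mathsf{O}(d)$ with $\sigma_{yx}=\sigma_{xy}^{\mathrm T}$. Connection Laplacian $\mathcal{L}=\mathcal{L}^\sigma$: $nd\times nd$ block matrix with blocks $\deg(x)I_d$ on the diagonal, $-w_{xy}\sigma_{xy}$ for $x\sim y$, $0$ otherwise; $\dagger$ = Moore–Penrose pseudoinverse. For $M=\begin{bmatrix}A&B\\C&D\end{bmatrix}$, $M/D=A-BD^\dagger C$. Conductance matrix $\mathcal{C}^\sigma(i,j)=\mathcal{L}/\mathcal{L}_{\{i,j\}^c,\{i,j\}^c}=\begin{bmatrix}\mathcal{C}^\sigma_{ii}&\mathcal{C}^\sigma_{ij}\\ \mathcal{C}^\sigma_{ji}&\mathcal{C}^\sigma_{jj}\end{bmatrix}$ (blocks ordered $i$ then $j$; the diagonal blocks are invertible). $\Omega^0_{ij}=\mathbb{E}[\prod_{\ell=1}^{T^0_j}\sigma_{X_{\ell-1}X_\ell}\mid X_0=i]$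 for the simple random walk $(X_t)$ with transition probabilities $w_{xy}/\deg(x)$ and $T^0_j=\inf\{t\ge0:X_t=j\}$. $\mathcal{W}_{i\to j}=\mathcal{L}^\dagger N_{ij}$, where $N_{ij}$ is the $nd\times d$ block column with $I_d$ at node $i$, $-(\Omega^0_{ij})^{\mathrm T}$ at node $j$, $0$ elsewhere; $\mathcal{W}_{i\to j}(x)$ is its block at $x$. $\mathcal{R}^\sigma(i,j)=\begin{bmatrix}\mathcal{W}_{i\to j}(i)&\mathcal{W}_{j\to i}(i)\\ \mathcal{W}_{i\to j}(j)&\mathcal{W}_{j\to i}(j)\end{bmatrix}$. *)

(* Defs.v *)
From HB Require Import structures.
From mathcomp Require Import all_boot all_order all_algebra.
From mathcomp Require Import all_classical all_reals topology normedtype sequences.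
From Stdlib Require Import ClassicalEpsilon.

Set Implicit Arguments.
Unset Strict Implicit.
Unset Printing Implicit Defensive.

Import Order.TTheory GRing.Theory Num.Theory.
Import numFieldNormedType.Exports.
Local Open Scope ring_scope.

Section ConnectionGraph.
Variables (R : realType) (n d : nat).
Variable w : 'I_n -> 'I_n -> R.           (* weights; x ~ y iff 0 < w x y *)
Variable sigma : 'I_n -> 'I_n -> 'M[R]_d.

Definition is_connection_graph : Prop :=
  [/\ forall x y, 0 <= w x y,
      forall x y, w x y = w y x,
      forall x, w x x = 0
    & forall x y, connect (fun a b => 0 < w a b) x y] /\
  [/\ forall x y, 0 < w x y -> sigma x y *m (sigma x y)^T = 1%:M
    & forall x y, 0 < w x y -> sigma y x = (sigma x y)^T].

Definition deg (x : 'I_n) : R := \sum_(y < n) w x y.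

(* Index set of the nd x nd matrices: pairs (node, component). *)
Definition idx := ('I_n * 'I_d)%type.
Definition ND := #|{: idx}|.

(* Entries of the connection Laplacian, indexed by pairs (node, component):
   block deg(x) I_d on the diagonal, -w_xy sigma_xy off the diagonal
   (which is 0 when x, y are not adjacent since then w x y = 0). *)
Definition lapf (u v : idx) : R :=
  if u.1 == v.1 then deg u.1 * (u.2 == v.2)%:R
  else - w u.1 v.1 * sigma u.1 v.1 u.2 v.2.

Definition lapmx : 'M[R]_ND := \matrix_(a, b) lapf (enum_val a) (enum_val b).

Definition blockof m (M : 'M[R]_(ND, m)) (x : 'I_n) : 'M[R]_(d, m) :=
  \matrix_(k, l) M (enum_rank (x, k)) l.

End ConnectionGraph.

Definition is_MP_pinv (R : realType) m p (A : 'M[R]_(m, p)) (X : 'M[R]_(p, m)) :=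
  [/\ A *m X *m A = A, X *m A *m X = X,
      (A *m X)^T = A *m X & (X *m A)^T = X *m A].

Definition pinvmp (R : realType) m p (A : 'M[R]_(m, p)) : 'M[R]_(p, m) :=
  epsilon (inhabits 0) (is_MP_pinv A).

Section Conductance.
Variables (R : realType) (n d : nat).
Variable w : 'I_n -> 'I_n -> R.
Variable sigma : 'I_n -> 'I_n -> 'M[R]_d.
Variables (i j : 'I_n).

Definition compl_ij : {set idx n d} := [set u | (u.1 != i) && (u.1 != j)].

Definition Dsub : 'M[R]_#|compl_ij| :=
  \matrix_(a, b) lapf w sigma (enum_val a) (enum_val b).

(* Entries of the Schur complement L / D = A - B D^dagger C,
   for u, v indices at nodes i or j. *)
Definition schurf (u v : idx n d) : R :=
  lapf w sigma u v -
  \sum_(a < #|compl_ij|) \sum_(b < #|compl_ij|)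
     lapf w sigma u (enum_val a) * pinvmp Dsub a b * lapf w sigma (enum_val b) v.

Definition Cblock (x y : 'I_n) : 'M[R]_d :=
  \matrix_(k, l) schurf (x, k) (y, l).

End Conductance.

Section Walk.
Variables (R : realType) (n d : nat).
Variable w : 'I_n -> 'I_n -> R.
Variable sigma : 'I_n -> 'I_n -> 'M[R]_d.

Definition trans (x y : 'I_n) : R := w x y / deg w x.

Definition hits_first (i j : 'I_n) t (p : {ffun 'I_t.+1 -> 'I_n}) : bool :=
  [&& p ord0 == i, p ord_max == j &
      [forall s : 'I_t.+1, (s < t)%N ==> (p s != j)]].

Definition path_prob t (p : {ffun 'I_t.+1 -> 'I_n}) : R :=
  \prod_(l < t) trans (p (inord l)) (p (inord l.+1)).

Definition path_hol t (p : {ffun 'I_t.+1 -> 'I_n}) : 'M[R]_d :=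
  \big[mulmx/1%:M]_(l < t) sigma (p (inord l)) (p (inord l.+1)).

Definition Omega_partial (i j : 'I_n) (N : nat) : 'M[R]_d :=
  \sum_(t < N.+1) \sum_(p : {ffun 'I_t.+1 -> 'I_n} | hits_first i j p)
     path_prob p *: path_hol p.

(* Omega^0_ij = E[ prod_{l=1}^{T_j^0} sigma_{X_{l-1} X_l} | X_0 = i ]
   (entrywise limit of the partial expectations). *)
Definition Omega0 (i j : 'I_n) : 'M[R]_d :=
  \matrix_(k, l) limn (fun N => Omega_partial i j N k l).

Definition Nij (i j : 'I_n) : 'M[R]_(ND n d, d) :=
  \matrix_(a, l) let u := enum_val a in
    if u.1 == i then (u.2 == l)%:R
    else if u.1 == j then - (Omega0 i j)^T u.2 l else 0.

Definition Wij (i j : 'I_n) : 'M[R]_(ND n d, d) :=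
  pinvmp (lapmx w sigma) *m Nij i j.

Definition Rmat (i j : 'I_n) : 'M[R]_(d + d) :=
  block_mx (blockof (Wij i j) i) (blockof (Wij j i) i)
           (blockof (Wij i j) j) (blockof (Wij j i) j).

End Walk.

(* Main.v *)
Require Import Defs.
From HB Require Import structures.
From mathcomp Require Import all_boot all_order all_algebra.
From mathcomp Require Import all_classical all_reals topology normedtype sequences.
From Stdlib Require Import ClassicalEpsilon.
From mathcomp Require Import lra.
Import Order.TTheory GRing.Theory Num.Theory.
Import numFieldNormedType.Exports.
Local Open Scope ring_scope.
Set Implicit Arguments.
Unset Strict Implicit.
Unset Printing Implicit Defensive.

Section Paths.
Variable n : nat.

Definition pcons t (x : 'I_n) (q : {ffun 'I_t.+1 -> 'I_n}) : {ffun 'I_t.+2 -> 'I_n} :=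
  [ffun s : 'I_t.+2 => if nat_of_ord s is k.+1 then q (inord k) else x].
Definition ptail t (p : {ffun 'I_t.+2 -> 'I_n}) : {ffun 'I_t.+1 -> 'I_n} :=
  [ffun s => p (lift ord0 s)].

Lemma pcons0 t x (q : {ffun 'I_t.+1 -> 'I_n}) : pcons x q ord0 = x.
Proof. by rewrite ffunE. Qed.

Lemma pconsS t x (q : {ffun 'I_t.+1 -> 'I_n}) k : (k < t.+1)%N ->
  pcons x q (inord k.+1) = q (inord k).
Proof. by move=> hk; rewrite ffunE inordK. Qed.

Lemma pconsK t (p : {ffun 'I_t.+2 -> 'I_n}) : pcons (p ord0) (ptail p) = p.
Proof.
apply/ffunP=> s; rewrite ffunE; case: s => [[|k] hk] /=.
  by congr (p _); apply/val_inj.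
rewrite ffunE; congr (p _); apply/val_inj => /=.
by rewrite /bump /= inordK.
Qed.

Lemma ptailK t x (q : {ffun 'I_t.+1 -> 'I_n}) : ptail (pcons x q) = q.
Proof.
apply/ffunP=> s; rewrite !ffunE /= add0n; congr (q _); apply/val_inj.
by rewrite /= inordK.
Qed.

Lemma sum_ffunS (V : nmodType) t (F : {ffun 'I_t.+2 -> 'I_n} -> V) :
  \sum_p F p = \sum_x \sum_(q : {ffun 'I_t.+1 -> 'I_n}) F (pcons x q).
Proof.
rewrite pair_big /=.
rewrite (reindex (fun p : {ffun 'I_t.+2 -> 'I_n} => (p ord0, ptail p))) /=.
  by apply: eq_bigr => p _; rewrite pconsK.
exists (fun u => pcons u.1 u.2) => [p _|[x q] _] /=; first by rewrite pconsK.
by rewrite pcons0 ptailK.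
Qed.

Lemma hits_pcons (i j x : 'I_n) t (q : {ffun 'I_t.+1 -> 'I_n}) : i != j ->
  hits_first i j (pcons x q) = (x == i) && hits_first (q ord0) j q.
Proof.
move=> hij; rewrite /hits_first pcons0 eqxx /=.
have -> : pcons x q ord_max = q ord_max.
  rewrite -[ord_max in LHS](_ : inord t.+1 = ord_max) ?pconsS //.
    by congr (q _); apply/val_inj; rewrite /= inordK.
  by apply/val_inj; rewrite /= inordK.
case: (eqVneq x i) => [->|] //=; case: (q ord_max == j) => //=.
apply/forallP/forallP => /= H s.
  apply/implyP => hs.
  have hs1 : (s.+1 < t.+2)%N by rewrite ltnS ltn_ord.
  have := H (Ordinal hs1); rewrite /= ltnS hs /= ffunE /=.
  by congr (q _ != j); apply/val_inj; rewrite /= inordK // ltn_ord.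
apply/implyP; case: s => [[|k] hk] /= hk'.
  by rewrite ffunE.
have hk2 : (k < t.+1)%N by [].
have hk3 : (k < t)%N by [].
rewrite ffunE /=; have := H (Ordinal hk2); rewrite /= hk3 /=.
by congr (q _ != j); apply/val_inj; rewrite /= inordK.
Qed.

End Paths.


Section Rec.
Variables (R : realType) (n d : nat).
Variable w : 'I_n -> 'I_n -> R.
Variable sigma : 'I_n -> 'I_n -> 'M[R]_d.

Lemma sum_hits_step (V : nmodType) (i j : 'I_n) t (G : {ffun 'I_t.+2 -> 'I_n} -> V) :
  i != j ->
  \sum_(p | hits_first i j p) G p =
  \sum_y \sum_(q : {ffun 'I_t.+1 -> 'I_n} | hits_first y j q) G (pcons i q).
Proof.
move=> hij; rewrite big_mkcond sum_ffunS (bigD1 i) //=.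
rewrite [X in _ + X]big1 ?addr0; last first.
  by move=> x hx; apply: big1 => q _; rewrite hits_pcons // (negbTE hx).
under eq_bigr => q _ do rewrite hits_pcons // eqxx /=.
rewrite -big_mkcond (partition_big (fun q : {ffun 'I_t.+1 -> 'I_n} => q ord0) predT) //=.
apply: eq_bigr => y _; apply: eq_bigl => q.
rewrite /hits_first eqxx /= andbC.
by [].
Qed.

Lemma inord0 m : (inord 0 : 'I_m.+1) = ord0.
Proof. by apply/val_inj; rewrite /= inordK. Qed.

Lemma pcons_at0 t x (q : {ffun 'I_t.+1 -> 'I_n}) : pcons x q (inord 0) = x.
Proof. by rewrite inord0 pcons0. Qed.

Lemma path_prob_cons t x (q : {ffun 'I_t.+1 -> 'I_n}) :
  path_prob w (pcons x q) = trans w x (q ord0) * path_prob w q.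
Proof.
rewrite /path_prob big_ord_recl pcons_at0 pconsS // inord0; congr (_ * _).
apply: eq_bigr => l _ /=; rewrite /bump /= !add1n pconsS ?pconsS //.
  by rewrite ltnS ltn_ord.
by rewrite ltnS ltnW.
Qed.

Lemma path_hol_cons t x (q : {ffun 'I_t.+1 -> 'I_n}) :
  path_hol sigma (pcons x q) = sigma x (q ord0) *m path_hol sigma q.
Proof.
rewrite /path_hol big_ord_recl pcons_at0 pconsS // inord0; congr (_ *m _).
apply: eq_bigr => l _ /=; rewrite /bump /= !add1n pconsS ?pconsS //.
  by rewrite ltnS ltn_ord.
by rewrite ltnS ltnW.
Qed.

Definition Tt (x j : 'I_n) t : 'M[R]_d :=
  \sum_(p : {ffun 'I_t.+1 -> 'I_n} | hits_first x j p) path_prob w p *: path_hol sigma p.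
Definition Qt (x j : 'I_n) t : R :=
  \sum_(p : {ffun 'I_t.+1 -> 'I_n} | hits_first x j p) path_prob w p.
Definition Qs (x j : 'I_n) N : R := \sum_(t < N.+1) Qt x j t.

Lemma Omega_partialE x j N : Omega_partial w sigma x j N = \sum_(t < N.+1) Tt x j t.
Proof. by []. Qed.

Lemma Tt_step x j t : x != j ->
  Tt x j t.+1 = \sum_y trans w x y *: (sigma x y *m Tt y j t).
Proof.
move=> hxj; rewrite /Tt sum_hits_step //; apply: eq_bigr => y _.
rewrite mulmx_sumr scaler_sumr; apply: eq_bigr => q /and3P[/eqP q0 _ _].
rewrite path_prob_cons path_hol_cons q0. by rewrite -scalerA -scalemxAr.
Qed.

Lemma Qt_step x j t : x != j ->
  Qt x j t.+1 = \sum_y trans w x y * Qt y j t.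
Proof.
move=> hxj; rewrite /Qt sum_hits_step //; apply: eq_bigr => y _.
rewrite mulr_sumr; apply: eq_bigr => q /and3P[/eqP q0 _ _].
by rewrite path_prob_cons q0.
Qed.

Lemma hits0 x j (p : {ffun 'I_1 -> 'I_n}) : hits_first x j p = (x == j) && (p == [ffun => j]).
Proof.
rewrite /hits_first.
have e : (ord_max : 'I_1) = ord0 by apply/val_inj.
rewrite e; case: (eqVneq (p ord0) j) => [pj|pj].
  rewrite pj eq_sym; case: (x == j) => //=.
  have -> : p == [ffun => j].
    by apply/eqP/ffunP => s; rewrite ffunE (ord1 s) pj.
  by apply/forallP.
rewrite /= andbC /=; symmetry; apply/negbTE; apply/nandP; right.
by apply: contra pj => /eqP ->; rewrite ffunE.
Qed.

Lemma hitsS_jj j t (p : {ffun 'I_t.+2 -> 'I_n}) : hits_first j j p = false.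
Proof.
rewrite /hits_first; apply/and3P => -[/eqP h0 _ /forallP /(_ ord0)].
by rewrite /= h0 eqxx.
Qed.

Lemma Tt0 x j : Tt x j 0 = if x == j then 1%:M else 0.
Proof.
rewrite /Tt; under eq_bigl => p do rewrite hits0.
case: (eqVneq x j) => [_|_] /=; last by rewrite big_pred0.
rewrite (big_pred1 [ffun => j]) // /path_prob /path_hol big_ord0 big_ord0 scale1r //.
Qed.

Lemma Qt0 x j : Qt x j 0 = if x == j then 1 else 0.
Proof.
rewrite /Qt; under eq_bigl => p do rewrite hits0.
case: (eqVneq x j) => [_|_] /=; last by rewrite big_pred0.
by rewrite (big_pred1 [ffun => j]) // /path_prob big_ord0.
Qed.

Lemma TtS_jj j t : Tt j j t.+1 = 0.
Proof. by rewrite /Tt big_pred0 // => p; rewrite hitsS_jj. Qed.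

Lemma QtS_jj j t : Qt j j t.+1 = 0.
Proof. by rewrite /Qt big_pred0 // => p; rewrite hitsS_jj. Qed.

Lemma Omega_jj j N : Omega_partial w sigma j j N = 1%:M.
Proof.
rewrite Omega_partialE big_ord_recl Tt0 eqxx big1 ?addr0 // => t _.
by rewrite TtS_jj.
Qed.

Lemma Qs_jj j N : Qs j j N = 1.
Proof.
rewrite /Qs big_ord_recl Qt0 eqxx big1 ?addr0 // => t _.
by rewrite QtS_jj.
Qed.

Lemma Omega_step x j N : x != j ->
  Omega_partial w sigma x j N.+1 =
  \sum_y trans w x y *: (sigma x y *m Omega_partial w sigma y j N).
Proof.
move=> hxj; rewrite Omega_partialE big_ord_recl Tt0 (negbTE hxj) add0r.
under eq_bigr => t _ do rewrite /bump /= ?add1n Tt_step //.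
rewrite exchange_big /=; apply: eq_bigr => y _.
by rewrite Omega_partialE mulmx_sumr scaler_sumr.
Qed.

Lemma Qs_step x j N : x != j ->
  Qs x j N.+1 = \sum_y trans w x y * Qs y j N.
Proof.
move=> hxj; rewrite /Qs big_ord_recl Qt0 (negbTE hxj) add0r.
under eq_bigr => t _ do rewrite /bump /= ?add1n Qt_step //.
rewrite exchange_big /=; apply: eq_bigr => y _.
by rewrite mulr_sumr.
Qed.

End Rec.


Section Bounds.
Variables (R : realType) (n d : nat).
Variable w : 'I_n -> 'I_n -> R.
Variable sigma : 'I_n -> 'I_n -> 'M[R]_d.
Hypothesis hw0 : forall x y, 0 <= w x y.
Hypothesis horth : forall x y, 0 < w x y -> sigma x y *m (sigma x y)^T = 1%:M.

Lemma deg_ge0 x : 0 <= deg w x.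
Proof. by apply: sumr_ge0 => y _. Qed.

Lemma trans_ge0 x y : 0 <= trans w x y.
Proof. by rewrite /trans divr_ge0 ?deg_ge0. Qed.

Lemma sum_trans_le1 x : \sum_y trans w x y <= 1.
Proof.
rewrite /trans -mulr_suml -/(deg w x).
have [->|h] := eqVneq (deg w x) 0; first by rewrite mul0r ler01.
by rewrite divff.
Qed.

Lemma path_prob_ge0 t (p : {ffun 'I_t.+1 -> 'I_n}) : 0 <= path_prob w p.
Proof. by apply: prodr_ge0 => l _; apply: trans_ge0. Qed.

Lemma Qt_ge0 x j t : 0 <= Qt w x j t.
Proof. by apply: sumr_ge0 => p _; apply: path_prob_ge0. Qed.

Lemma Qs_ge0 x j N : 0 <= Qs w x j N.
Proof. by apply: sumr_ge0 => t _; apply: Qt_ge0. Qed.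

Lemma Qs_le1 j N x : Qs w x j N <= 1.
Proof.
elim: N x => [|N IH] x.
  rewrite /Qs big_ord1 Qt0; case: (x == j) => //; exact: ler01.
have [->|hxj] := eqVneq x j; first by rewrite Qs_jj.
rewrite Qs_step //; apply: le_trans (sum_trans_le1 x).
apply: ler_sum => y _; rewrite -[X in _ <= X]mulr1.
by apply: ler_wpM2l; [apply: trans_ge0|apply: IH].
Qed.

Lemma QsS x j N : Qs w x j N.+1 = Qs w x j N + Qt w x j N.+1.
Proof. by rewrite /Qs big_ord_recr. Qed.

Lemma OmegaS x j N : Omega_partial w sigma x j N.+1 =
  Omega_partial w sigma x j N + Tt w sigma x j N.+1.
Proof. by rewrite !Omega_partialE big_ord_recr. Qed.

Lemma orth_prod t (M : 'I_t -> 'M[R]_d) :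
  (forall l, M l *m (M l)^T = 1%:M) ->
  (\big[mulmx/1%:M]_(l < t) M l) *m (\big[mulmx/1%:M]_(l < t) M l)^T = 1%:M.
Proof.
elim: t M => [|t IH] M hM; first by rewrite big_ord0 trmx1 mulmx1.
rewrite big_ord_recl /= trmx_mul mulmxA -(mulmxA (M ord0)) IH ?mulmx1 // => l.
Qed.

Lemma orth_entry (O : 'M[R]_d) k l : O *m O^T = 1%:M -> `|O k l| <= 1.
Proof.
move=> hO.
have h1 : \sum_m O k m ^+ 2 = 1.
  have := congr1 (fun M : 'M[R]_d => M k k) hO; rewrite !mxE eqxx mulr1n => <-.
  by apply: eq_bigr => m _; rewrite mxE expr2.
have h2 : O k l ^+ 2 <= 1.
  rewrite -h1 (bigD1 l) //= lerDl; apply: sumr_ge0 => m _; exact: sqr_ge0.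
rewrite -(@expr_le1 _ 2) // real_normK // num_real //.
Qed.

Lemma prob_pos_edges t (p : {ffun 'I_t.+1 -> 'I_n}) : path_prob w p != 0 ->
  forall l : 'I_t, 0 < w (p (inord l)) (p (inord l.+1)).
Proof.
move=> hp l; have : trans w (p (inord l)) (p (inord l.+1)) != 0.
  by apply: contra hp => /eqP h; rewrite /path_prob (bigD1 l) //= h mul0r.
rewrite /trans lt0r hw0 andbT; apply: contra => /eqP ->; by rewrite mul0r.
Qed.

Lemma term_bound t (p : {ffun 'I_t.+1 -> 'I_n}) k l :
  `|(path_prob w p *: path_hol sigma p) k l| <= path_prob w p.
Proof.
rewrite mxE normrM ger0_norm ?path_prob_ge0 //.
have [->|hp] := eqVneq (path_prob w p) 0; first by rewrite mul0r.
rewrite -[X in _ <= X]mulr1 ler_wpM2l ?path_prob_ge0 //.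
apply: orth_entry; apply: orth_prod => l'; apply: horth; exact: prob_pos_edges.
Qed.

Lemma Tt_bound x j t k l : `|Tt w sigma x j t k l| <= Qt w x j t.
Proof.
rewrite /Tt summxE; apply: le_trans (ler_norm_sum _ _ _) _.
by apply: ler_sum => p _; apply: term_bound.
Qed.

Lemma Omega_bound x j N k l : `|Omega_partial w sigma x j N k l| <= Qs w x j N.
Proof.
rewrite Omega_partialE summxE; apply: le_trans (ler_norm_sum _ _ _) _.
by apply: ler_sum => t _; apply: Tt_bound.
Qed.

Lemma Omega_cvg x j k l : cvgn (fun N => Omega_partial w sigma x j N k l).
Proof.
have hv : cvgn (fun N => Qs w x j N).
  apply: nondecreasing_is_cvgn.
    apply/nondecreasing_seqP => N; rewrite QsS lerDl; exact: Qt_ge0.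
  by exists 1 => _ [N _ <-]; apply: Qs_le1.
have hvu : cvgn (fun N => Qs w x j N + Omega_partial w sigma x j N k l).
  apply: nondecreasing_is_cvgn.
    apply/nondecreasing_seqP => N; rewrite QsS OmegaS mxE addrACA lerDl.
    have := Tt_bound x j N.+1 k l; rewrite ler_norml => /andP[h _].
    by rewrite addrC -lerBlDr sub0r.
  exists 2 => _ [N _ <-]; rewrite -[2](@mulr2n R) mulr2n.
  apply: lerD; first exact: Qs_le1.
  apply: le_trans (ler_norm _) _; apply: le_trans (Omega_bound _ _ _ _ _) _.
  exact: Qs_le1.
have -> : (fun N => Omega_partial w sigma x j N k l) =
  (fun N => Qs w x j N + Omega_partial w sigma x j N k l) - (fun N => Qs w x j N).
  by apply: funext => N; rewrite -[RHS]/(Qs w x j N + Omega_partial w sigma x j N k l - Qs w x j N) addrC addKr.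
exact: (is_cvgB hvu hv).
Qed.

End Bounds.


Section CvgSum.
Local Open Scope classical_set_scope.
Lemma cvg_sumR (R : realType) (I : Type) (r : seq I) (f : I -> nat -> R) (l : I -> R) :
  (forall i, f i @ \oo --> l i) ->
  (fun N => \sum_(i <- r) f i N) @ \oo --> \sum_(i <- r) l i.
Proof.
move=> hf; elim: r => [|a r IH].
  rewrite big_nil; have -> : (fun N => \sum_(i <- [::]) f i N) = (fun=> 0 : R).
    by apply: funext => N; rewrite big_nil.
  exact: cvg_cst.
rewrite big_cons; have -> : (fun N => \sum_(i <- a :: r) f i N) =
   f a + (fun N => \sum_(i <- r) f i N).
  by apply: funext => N; rewrite big_cons.
exact: cvgD.
Qed.

End CvgSum.

Section Harm.
Local Open Scope classical_set_scope.
Variables (R : realType) (n d : nat).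
Variable w : 'I_n -> 'I_n -> R.
Variable sigma : 'I_n -> 'I_n -> 'M[R]_d.
Hypothesis hw0 : forall x y, 0 <= w x y.
Hypothesis horth : forall x y, 0 < w x y -> sigma x y *m (sigma x y)^T = 1%:M.

Lemma Omega0_jj j : Omega0 w sigma j j = 1%:M.
Proof.
apply/matrixP => k l; rewrite mxE.
have -> : (fun N => Omega_partial w sigma j j N k l) = (fun=> (1%:M : 'M[R]_d) k l).
  by apply: funext => N; rewrite Omega_jj.
by apply: cvg_lim => //; exact: cvg_cst.
Qed.

Lemma Omega0_harm x j : x != j ->
  Omega0 w sigma x j = \sum_y trans w x y *: (sigma x y *m Omega0 w sigma y j).
Proof.
move=> hxj; apply/matrixP => k l; rewrite [LHS]mxE summxE.
apply: cvg_lim => //.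
rewrite -cvg_shiftS /=.
have -> : (fun N => Omega_partial w sigma x j N.+1 k l) =
  (fun N => \sum_y trans w x y * \sum_m sigma x y k m * Omega_partial w sigma y j N m l).
  apply: funext => N; rewrite Omega_step // summxE; apply: eq_bigr => y _.
  by rewrite !mxE.
have -> : \sum_y (trans w x y *: (sigma x y *m Omega0 w sigma y j)) k l =
  \sum_y trans w x y * \sum_m sigma x y k m * Omega0 w sigma y j m l.
  by apply: eq_bigr => y _; rewrite !mxE.
apply: cvg_sumR => y; apply: cvgMl_tmp.
apply: cvg_sumR => m; apply: cvgMl_tmp.
rewrite mxE; exact: (Omega_cvg hw0 horth).
Qed.

End Harm.


Lemma sum_pairE (R : nmodType) (n d : nat) (F : ('I_n * 'I_d) -> R) :
  \sum_(u : 'I_n * 'I_d) F u = \sum_x \sum_k F (x, k).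
Proof. by rewrite pair_big /=; apply: eq_bigr => -[]. Qed.

Section Energy.
Variables (R : realType) (n d : nat).
Variable w : 'I_n -> 'I_n -> R.
Variable sigma : 'I_n -> 'I_n -> 'M[R]_d.
Hypothesis hw0 : forall x y, 0 <= w x y.
Hypothesis hsym : forall x y, w x y = w y x.
Hypothesis hdiag : forall x, w x x = 0.
Hypothesis horth : forall x y, 0 < w x y -> sigma x y *m (sigma x y)^T = 1%:M.

Lemma lapf_split x k y m : lapf w sigma (x, k) (y, m) =
  (x == y)%:R * deg w x * (k == m)%:R - w x y * sigma x y k m.
Proof.
rewrite /lapf /=; case: (eqVneq x y) => [<-|_]; first by rewrite hdiag mul0r subr0 mul1r.
by rewrite mul0r mul0r add0r mulNr.
Qed.

Variable f : idx n d -> R.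
Let F x k := f (x, k).
Let Sf x y k := \sum_l sigma x y k l * F y l.

Lemma lap_row x k : \sum_v lapf w sigma (x, k) v * f v =
  \sum_y w x y * (F x k - Sf x y k).
Proof.
rewrite sum_pairE.
under eq_bigr => y _ do under eq_bigr => m _ do rewrite lapf_split mulrBl.
under eq_bigr => y _ do rewrite sumrB.
rewrite sumrB (bigD1 x) //= (bigD1 k) //= !eqxx /= !mulr1n mul1r mulr1.
rewrite [X in _ + X + _]big1 ?addr0; last first.
  move=> y hy; rewrite big1 // => m _; by rewrite eq_sym (negbTE hy) mulr0n !mul0r.
rewrite [X in _ + X - _]big1 ?addr0; last first.
  by move=> m hm; rewrite eq_sym (negbTE hm) mulr0n mulr0 mul0r.
under [RHS]eq_bigr => y _ do rewrite mulrBr.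
rewrite sumrB -mulr_suml -/(deg w x); congr (_ - _).
by apply: eq_bigr => y _; rewrite /Sf mulr_sumr; apply: eq_bigr => m _; rewrite mulrA.
Qed.

Definition energy := \sum_u \sum_v f u * lapf w sigma u v * f v.



Lemma energy_rows : energy = \sum_x \sum_k F x k * \sum_y w x y * (F x k - Sf x y k).
Proof.
rewrite /energy sum_pairE; apply: eq_bigr => x _; apply: eq_bigr => k _.
rewrite -lap_row mulr_sumr; apply: eq_bigr => v _; by rewrite mulrA.
Qed.

Lemma norm_orth x y : 0 < w x y -> \sum_k Sf x y k ^+ 2 = \sum_k F y k ^+ 2.
Proof.
move=> hxy; pose v : 'cV[R]_d := \col_l F y l.
have hS : forall k, Sf x y k = (sigma x y *m v) k 0.
  by move=> k; rewrite mxE; apply: eq_bigr => l _; rewrite mxE.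
have hn : forall (u : 'cV[R]_d), (u^T *m u) 0 0 = \sum_k u k 0 ^+ 2.
  by move=> u; rewrite mxE; apply: eq_bigr => k _; rewrite mxE expr2.
have hO : (sigma x y)^T *m sigma x y = 1%:M by apply: mulmx1C; apply: horth.
transitivity (((sigma x y *m v)^T *m (sigma x y *m v)) 0 0).
  by rewrite hn; apply: eq_bigr => k _; rewrite hS.
rewrite trmx_mul mulmxA -(mulmxA v^T) hO mulmx1 hn.
by apply: eq_bigr => k _; rewrite mxE.
Qed.

Let A x := \sum_k F x k ^+ 2.
Let C x y := \sum_k F x k * Sf x y k.

Lemma sq_expand x y : w x y * \sum_k (F x k - Sf x y k) ^+ 2 =
  w x y * A x - (w x y * C x y) *+ 2 + w x y * A y.
Proof.
have [hxy|hxy] := eqVneq (w x y) 0; first by rewrite hxy !mul0r mul0rn subr0 addr0.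
have hp : 0 < w x y by rewrite lt0r hxy hw0.
rewrite /A -(norm_orth hp) -mulrnAr -mulrBr -mulrDr; congr (_ * _).
rewrite /C -sumrMnl -sumrB -big_split /=; apply: eq_bigr => k _.
by rewrite sqrrB.
Qed.

Lemma energy_AC : energy = \sum_x \sum_y w x y * (A x - C x y).
Proof.
rewrite energy_rows; apply: eq_bigr => x _.
under eq_bigr => k _ do rewrite mulr_sumr.
rewrite exchange_big /=; apply: eq_bigr => y _.
rewrite /A /C -sumrB mulr_sumr; apply: eq_bigr => k _.
by rewrite mulrCA mulrBr expr2.
Qed.

Lemma energy2 : energy *+ 2 = \sum_x \sum_y w x y * \sum_k (F x k - Sf x y k) ^+ 2.
Proof.
under [RHS]eq_bigr => x _ do under eq_bigr => y _ do rewrite sq_expand.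
under [RHS]eq_bigr => x _ do rewrite big_split /= sumrB.
rewrite big_split /= sumrB.
have -> : \sum_x \sum_y w x y * A y = \sum_x \sum_y w x y * A x.
  by rewrite exchange_big /=; apply: eq_bigr => x _; apply: eq_bigr => y _; rewrite hsym.
rewrite energy_AC.
under eq_bigr => x _ do under eq_bigr => y _ do rewrite mulrBr.
under eq_bigr => x _ do rewrite sumrB.
rewrite sumrB.
set P := \sum_x \sum_y w x y * A x.
set Q := \sum_x \sum_y w x y * C x y.
have -> : \sum_x \sum_y (w x y * C x y) *+ 2 = Q *+ 2.
  by rewrite /Q -sumrMnl; apply: eq_bigr => x _; rewrite sumrMnl.
by rewrite !mulr2n; lra.
Qed.

Lemma energy_zero : energy = 0 -> forall u, \sum_v lapf w sigma u v * f v = 0.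
Proof.
move=> he [x k]; rewrite lap_row.
have h2 : \sum_x \sum_y w x y * \sum_k (F x k - Sf x y k) ^+ 2 = 0.
  by rewrite -energy2 he mul0rn.
have hnn : forall x y, 0 <= w x y * \sum_k (F x k - Sf x y k) ^+ 2.
  by move=> x' y; apply: mulr_ge0 => //; apply: sumr_ge0 => k' _; exact: sqr_ge0.
have h3 : forall x y, w x y * \sum_k (F x k - Sf x y k) ^+ 2 = 0.
  have hout : forall x', 0 <= \sum_y w x' y * \sum_k (F x' k - Sf x' y k) ^+ 2.
    by move=> x'; apply: sumr_ge0 => y _; apply: hnn.
  have h4 := psumr_eq0P (fun x' _ => hout x') h2.
  by move=> x' y; apply: (@psumr_eq0P _ _ _ _ (fun y' _ => hnn x' y') (@h4 x' isT) y isT).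
apply: big1 => y _.
have [hxy|hxy] := eqVneq (w x y) 0; first by rewrite hxy mul0r.
have := h3 x y; move/eqP; rewrite mulf_eq0 (negbTE hxy) /= => /eqP hs.
have := @psumr_eq0P _ _ predT (fun k => (F x k - Sf x y k) ^+ 2) (fun _ _ => sqr_ge0 _) hs k isT.
by move=> /eqP; rewrite sqrf_eq0 subr_eq0 => /eqP ->; rewrite subrr mulr0.
Qed.

End Energy.


Lemma inj_unit (R : realType) m (A : 'M[R]_m) :
  (forall v : 'cV_m, A *m v = 0 -> v = 0) -> A \in unitmx.
Proof.
move=> hA; rewrite -unitmx_tr -row_free_unit -kermx_eq0; apply/eqP/row_matrixP => i.
rewrite row0; have h := mulmx_ker A^T.
have : A *m (row i (kermx A^T))^T = 0.
  by rewrite -{1}[A]trmxK -trmx_mul -row_mul h row0 trmx0.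
by move/hA => /(congr1 trmx); rewrite trmxK trmx0.
Qed.

Lemma pinv_unit (R : realType) m (A : 'M[R]_m) : A \in unitmx -> pinvmp A = invmx A.
Proof.
move=> hA.
have h : is_MP_pinv A (invmx A).
  by split; rewrite ?mulmxV ?mulVmx ?mul1mx ?mulmx1 ?trmx1.
have := epsilon_spec (inhabits 0) (is_MP_pinv A) (ex_intro _ _ h).
rewrite -/(pinvmp A); case=> h1 _ _ _.
transitivity (invmx A *m (A *m pinvmp A *m A) *m invmx A).
  by rewrite !mulmxA mulVmx // mul1mx -mulmxA mulmxV // mulmx1.
by rewrite h1 mulVmx // mul1mx.
Qed.

Section LA.
Variables (R : realType) (n d : nat).
Variable w : 'I_n -> 'I_n -> R.
Variable sigma : 'I_n -> 'I_n -> 'M[R]_d.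
Hypothesis hw0 : forall x y, 0 <= w x y.
Hypothesis hsym : forall x y, w x y = w y x.
Hypothesis hdiag : forall x, w x x = 0.
Hypothesis horth : forall x y, 0 < w x y -> sigma x y *m (sigma x y)^T = 1%:M.
Hypothesis htr : forall x y, 0 < w x y -> sigma y x = (sigma x y)^T.
Hypothesis hK : lapmx w sigma \in unitmx.

Local Notation K := (lapmx w sigma).
Local Notation L := (lapf w sigma).

Lemma sum_ND (V : nmodType) (F : idx n d -> V) :
  \sum_(a < ND n d) F (enum_val a) = \sum_u F u.
Proof. by rewrite -big_enum_val /=; apply: eq_bigl => u; rewrite inE. Qed.

Lemma mulK_entry m (M : 'M[R]_(ND n d, m)) u l :
  (K *m M) (enum_rank u) l = \sum_v L u v * M (enum_rank v) l.
Proof.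
rewrite mxE -sum_ND; apply: eq_bigr => a _; by rewrite mxE enum_rankK enum_valK.
Qed.

Lemma K_inj (f : idx n d -> R) :
  (forall u, \sum_v L u v * f v = 0) -> forall u, f u = 0.
Proof.
move=> hf u; pose z : 'cV[R]_(ND n d) := \col_a f (enum_val a).
have hz : K *m z = 0.
  apply/matrixP => a l; rewrite -[a]enum_valK mulK_entry !mxE -[RHS](hf (enum_val a)).
  by apply: eq_bigr => v _; rewrite mxE enum_rankK.
have : z = 0 by rewrite -(mulKmx hK z) hz mulmx0.
by move/matrixP/(_ (enum_rank u) ord0); rewrite !mxE enum_rankK.
Qed.

Lemma lapf_sym u v : L u v = L v u.
Proof.
rewrite /lapf eq_sym; case: (eqVneq v.1 u.1) => [e|ne].
  by rewrite e eq_sym.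
rewrite hsym; have [h0|hp] := eqVneq (w v.1 u.1) 0; first by rewrite h0 !oppr0 !mul0r.
have hp' : 0 < w v.1 u.1 by rewrite lt0r hp hw0.
by rewrite (htr hp') mxE.
Qed.

Lemma K_tr : K^T = K.
Proof. by apply/matrixP => a b; rewrite !mxE lapf_sym. Qed.

Lemma energy_inj (f : idx n d -> R) : energy w sigma f = 0 -> forall u, f u = 0.
Proof. by move=> he; apply: K_inj; apply: energy_zero. Qed.

Lemma blockof_mul m p (M : 'M[R]_(ND n d, m)) (B : 'M[R]_(m, p)) x :
  blockof (M *m B) x = blockof M x *m B.
Proof. by apply/matrixP => k l; rewrite !mxE; apply: eq_bigr => c _; rewrite mxE. Qed.

End LA.


Section Main.
Variables (R : realType) (n d : nat).
Variable w : 'I_n -> 'I_n -> R.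
Variable sigma : 'I_n -> 'I_n -> 'M[R]_d.
Hypothesis hw0 : forall x y, 0 <= w x y.
Hypothesis hsym : forall x y, w x y = w y x.
Hypothesis hdiag : forall x, w x x = 0.
Hypothesis horth : forall x y, 0 < w x y -> sigma x y *m (sigma x y)^T = 1%:M.
Hypothesis htr : forall x y, 0 < w x y -> sigma y x = (sigma x y)^T.
Hypothesis hK : lapmx w sigma \in unitmx.
Variables (i j : 'I_n).
Hypothesis hij : i != j.

Local Notation K := (lapmx w sigma).
Local Notation L := (lapf w sigma).
Local Notation Om := (Omega0 w sigma).

Definition Zm : 'M[R]_(ND n d, d) :=
  \matrix_(a, l) Om (enum_val a).1 j (enum_val a).2 l.

Lemma Zm_entry u l : Zm (enum_rank u) l = Om u.1 j u.2 l.
Proof. by rewrite mxE enum_rankK. Qed.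

Lemma deg_trans x y : deg w x * trans w x y = w x y.
Proof.
rewrite /trans; have [h|h] := eqVneq (deg w x) 0.
  have -> : w x y = 0.
    by apply: (@psumr_eq0P _ _ predT (w x)) => // z _; apply: hw0.
  by rewrite h mul0r.
by rewrite mulrC divfK.
Qed.

Lemma KZ_harm u l : u.1 != j -> (K *m Zm) (enum_rank u) l = 0.
Proof.
case: u => x k /= hx; rewrite mulK_entry.
under eq_bigr => v _ do rewrite Zm_entry.
rewrite (lap_row sigma hdiag (fun v => Om v.1 j v.2 l)) /=.
have hh := congr1 (fun M : 'M[R]_d => M k l) (Omega0_harm hw0 horth hx).
rewrite /= summxE in hh.
under eq_bigr => y _ do rewrite mulrBr.
rewrite sumrB -mulr_suml -/(deg w x) hh mulr_sumr; apply/eqP; rewrite subr_eq0; apply/eqP.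
apply: eq_bigr => y _; rewrite !mxE mulrA deg_trans; by [].
Qed.

Local Notation G := (blockof (K *m Zm) j).

Lemma blockZj : blockof Zm j = 1%:M.
Proof. by apply/matrixP => k l; rewrite mxE Zm_entry /= Omega0_jj. Qed.

Lemma G_unit : G \in unitmx.
Proof.
apply: inj_unit => u hu.
have hz : K *m (Zm *m u) = 0.
  rewrite mulmxA; apply/matrixP => a c; rewrite -[a]enum_valK.
  case: (enum_val a) => x k; rewrite mxE [RHS]mxE.
  case: (eqVneq x j) => [->|hx].
    have e := congr1 (fun M : 'M[R]_(d,1) => M k c) hu; rewrite !mxE in e.
    rewrite -[RHS]e; apply: eq_bigr => m _; by rewrite [G k m]mxE.
  rewrite big1 // => m _; by rewrite KZ_harm // mul0r.
have hz0 : Zm *m u = 0 by rewrite -(mulKmx hK (Zm *m u)) hz mulmx0.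
have : blockof (Zm *m u) j = u by rewrite blockof_mul blockZj mul1mx.
rewrite hz0 => <-; by apply/matrixP => k l; rewrite !mxE.
Qed.

Local Notation W := (Wij w sigma i j).
Local Notation N := (Nij w sigma i j).

Lemma KW : K *m W = N.
Proof. by rewrite /Wij pinv_unit // mulKVmx. Qed.

Lemma N_entry u l : N (enum_rank u) l =
  if u.1 == i then (u.2 == l)%:R else if u.1 == j then - (Om i j)^T u.2 l else 0.
Proof. by rewrite mxE enum_rankK. Qed.

Lemma sum_split_node (F : idx n d -> R) (x0 : 'I_n) :
  \sum_u F u = \sum_k F (x0, k) + \sum_(x | x != x0) \sum_k F (x, k).
Proof. by rewrite sum_pairE (bigD1 x0). Qed.

Lemma WKZ : W^T *m (K *m Zm) = N^T *m Zm.
Proof. by rewrite mulmxA -{1}(K_tr hw0 hsym htr) -trmx_mul KW. Qed.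

Lemma WKZ_left : W^T *m (K *m Zm) = (blockof W j)^T *m G.
Proof.
apply/matrixP => k l; rewrite !mxE.
transitivity (\sum_u W^T k (enum_rank u) * (K *m Zm) (enum_rank u) l).
  by rewrite -sum_ND; apply: eq_bigr => a _; rewrite enum_valK.
rewrite (sum_split_node _ j) [X in _ + X]big1 ?addr0.
  by apply: eq_bigr => m _; rewrite !mxE.
by move=> x hx; apply: big1 => m _; rewrite KZ_harm // mulr0.
Qed.

Lemma sum_deltaL (F : 'I_d -> R) k : \sum_m (m == k)%:R * F m = F k.
Proof.
rewrite (bigD1 k) //= eqxx mul1r big1 ?addr0 // => m /negbTE ->; by rewrite mul0r.
Qed.

Lemma sum_deltaR (F : 'I_d -> R) k : \sum_m F m * (m == k)%:R = F k.
Proof.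
rewrite (bigD1 k) //= eqxx mulr1 big1 ?addr0 // => m /negbTE ->; by rewrite mulr0.
Qed.

Lemma NZ0 : N^T *m Zm = 0.
Proof.
apply/matrixP => k l; rewrite !mxE.
transitivity (\sum_u N (enum_rank u) k * Zm (enum_rank u) l).
  by rewrite -sum_ND; apply: eq_bigr => a _; rewrite enum_valK mxE.
have hji : j != i by rewrite eq_sym.
rewrite (sum_split_node _ i) (bigD1 j) //= [X in _ + (_ + X)]big1 ?addr0; last first.
  move=> x /andP[hxi hxj]; apply: big1 => m _.
  by rewrite N_entry /= (negbTE hxi) (negbTE hxj) mul0r.
under eq_bigr => m _ do rewrite N_entry Zm_entry /= eqxx.
under [X in _ + X]eq_bigr => m _ do rewrite N_entry Zm_entry /= eqxx (negbTE hji) Omega0_jj !mxE.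
rewrite sum_deltaL.
under [X in _ + X]eq_bigr => m _ do rewrite mulNr.
by rewrite sumrN sum_deltaR [Om i j k l]mxE subrr.
Qed.

Lemma Wj0 : blockof W j = 0.
Proof.
have h : (blockof W j)^T *m G = 0 by rewrite -WKZ_left WKZ NZ0.
have : (blockof W j)^T = 0.
  by rewrite -(mulmxK G_unit (blockof W j)^T) h mul0mx.
by move/(congr1 trmx); rewrite trmxK trmx0.
Qed.

Lemma sum_delta (T : finType) (F : T -> R) t0 : \sum_t (t == t0)%:R * F t = F t0.
Proof.
rewrite (bigD1 t0) //= eqxx mul1r big1 ?addr0 // => t /negbTE ->; by rewrite mul0r.
Qed.

Lemma sum_delta' (T : finType) (F : T -> R) t0 : \sum_t (t0 == t)%:R * F t = F t0.
Proof. by rewrite -(sum_delta F t0); apply: eq_bigr => t _; rewrite eq_sym. Qed.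

Local Notation S := (compl_ij d i j).

Lemma inS u : (u \in S) = (u.1 != i) && (u.1 != j).
Proof. by rewrite inE. Qed.

Lemma sum_split3 (F : idx n d -> R) :
  \sum_u F u = \sum_m F (i, m) + \sum_m F (j, m) + \sum_(c < #|S|) F (enum_val c).
Proof.
have hji : j != i by rewrite eq_sym.
rewrite (sum_split_node _ i) (bigD1 j) //= addrA -big_enum_val; congr (_ + _).
rewrite pair_big /=; apply: eq_big => [[x k]|[x k] _] //=.
by rewrite inS /= andbT.
Qed.

Local Notation Ds := (Dsub w sigma i j).

Lemma Ds_unit : Ds \in unitmx.
Proof.
apply: inj_unit => y hy.
pose f := fun u : idx n d => \sum_(c < #|S|) (enum_val c == u)%:R * y c ord0.
have hf : forall c, f (enum_val c) = y c ord0.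
  move=> c; rewrite /f -[RHS](sum_delta (fun c' => y c' ord0) c).
  by apply: eq_bigr => c' _; rewrite (inj_eq enum_val_inj).
have hL : forall u, \sum_v L u v * f v = \sum_(c < #|S|) L u (enum_val c) * y c ord0.
  move=> u; under eq_bigr => v _ do rewrite /f mulr_sumr.
  rewrite exchange_big /=; apply: eq_bigr => c _.
  under eq_bigr => v _ do rewrite mulrCA.
  by rewrite sum_delta'.
have hE : energy w sigma f = 0.
  rewrite /energy; under eq_bigr => u _ do under eq_bigr => v _ do rewrite -mulrA.
  under eq_bigr => u _ do rewrite -mulr_sumr hL.
  under eq_bigr => u _ do rewrite /f mulr_suml.
  rewrite exchange_big /=; apply: big1 => c _.
  under eq_bigr => u _ do rewrite mulrAC.
  rewrite -mulr_suml sum_delta'.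
  have := congr1 (fun M : 'cV[R]_#|S| => M c ord0) hy; rewrite !mxE => e.
  have hDy : \sum_(c0 < #|S|) L (enum_val c) (enum_val c0) * y c0 ord0 = 0.
    by rewrite -[RHS]e; apply: eq_bigr => c' _; rewrite mxE.
  by rewrite hDy ?mulr0 ?mul0r.
apply/matrixP => c l; rewrite (ord1 l) mxE -hf.
exact: (energy_inj hw0 hsym hdiag horth hK hE).
Qed.

Definition Lii : 'M[R]_d := \matrix_(k, m) L (i, k) (i, m).
Definition LiS : 'M[R]_(d, #|S|) := \matrix_(k, c) L (i, k) (enum_val c).
Definition LSi : 'M[R]_(#|S|, d) := \matrix_(c, m) L (enum_val c) (i, m).
Definition WS : 'M[R]_(#|S|, d) := \matrix_(c, l) W (enum_rank (enum_val c)) l.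

Lemma Cblock_eq : Cblock w sigma i j i i = Lii - LiS *m pinvmp Ds *m LSi.
Proof.
apply/matrixP => k m; rewrite !mxE /schurf; congr (_ - _).
rewrite exchange_big /=; apply: eq_bigr => b _; rewrite mxE mulr_suml.
by apply: eq_bigr => a _; rewrite !mxE.
Qed.

Lemma hWj m l : W (enum_rank (j, m)) l = 0.
Proof. by have := congr1 (fun M : 'M[R]_d => M m l) Wj0; rewrite !mxE. Qed.

Lemma rowi : Lii *m blockof W i + LiS *m WS = 1%:M.
Proof.
apply/matrixP => k l.
have := congr1 (fun M : 'M[R]_(ND n d, d) => M (enum_rank (i, k)) l) KW.
rewrite /= mulK_entry N_entry /= eqxx sum_split3 [X in _ + X + _]big1 ?addr0; last first.
  by move=> m _; rewrite hWj mulr0.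
move=> e; rewrite [RHS]mxE -e !mxE; congr (_ + _).
  by apply: eq_bigr => m _; rewrite !mxE.
by apply: eq_bigr => c _; rewrite !mxE.
Qed.

Lemma rowS : LSi *m blockof W i + Ds *m WS = 0.
Proof.
apply/matrixP => c l.
have := congr1 (fun M : 'M[R]_(ND n d, d) => M (enum_rank (enum_val c)) l) KW.
have := enum_valP c; rewrite inS => /andP[h1 h2].
rewrite /= mulK_entry N_entry (negbTE h1) (negbTE h2) sum_split3.
rewrite [X in _ + X + _]big1 ?addr0; last by move=> m _; rewrite hWj mulr0.
move=> e; rewrite [RHS]mxE -e !mxE; congr (_ + _).
  by apply: eq_bigr => m _; rewrite !mxE.
by apply: eq_bigr => c' _; rewrite !mxE.
Qed.

Lemma Wi_inv : blockof W i = invmx (Cblock w sigma i j i i).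
Proof.
have hS : LSi *m blockof W i = - (Ds *m WS).
  by apply/eqP; rewrite -addr_eq0 rowS.
have hC : Cblock w sigma i j i i *m blockof W i = 1%:M.
  rewrite Cblock_eq (pinv_unit Ds_unit) mulmxBl -!mulmxA hS mulmxN mulKmx ?Ds_unit //.
  by rewrite mulmxN opprK rowi.
have [hCu _] := mulmx1_unit hC.
by rewrite -[LHS](mulKmx hCu) hC mulmx1.
Qed.

End Main.


Lemma compl_sym n d (i j : 'I_n) : compl_ij d j i = compl_ij d i j.
Proof. by apply/setP => u; rewrite !inE andbC. Qed.

Lemma Cblock_sym (R : realType) n d w sigma (i j x y : 'I_n) :
  @Cblock R n d w sigma j i x y = Cblock w sigma i j x y.
Proof. by rewrite /Cblock /schurf /Dsub compl_sym. Qed.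

Unset Implicit Arguments.
Theorem proposition6p6 (R : realType) (n d : nat)
  (w : 'I_n -> 'I_n -> R) (sigma : 'I_n -> 'I_n -> 'M[R]_d) :
  is_connection_graph w sigma ->
  lapmx w sigma \in unitmx ->
  forall i j : 'I_n, i != j ->
  Rmat w sigma i j =
  block_mx (invmx (Cblock w sigma i j i i)) 0 0 (invmx (Cblock w sigma i j j j)).
Proof.
move=> [[hw0 hsym hdiag _] [horth htr]] hK i j hij.
have hji : j != i by rewrite eq_sym.
rewrite /Rmat (Wi_inv hw0 hsym hdiag horth htr hK hij) (Wi_inv hw0 hsym hdiag horth htr hK hji).
rewrite (Wj0 hw0 hsym hdiag horth htr hK hij) (Wj0 hw0 hsym hdiag horth htr hK hji).
by rewrite (@Cblock_sym _ _ _ w sigma i j j j).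
Qed.
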